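(* For $n\ge i+1\ge2$, \[ D_{n,i}=z^{i-1}\tau_iD_{n-i}-z^{i+2}\tau_{i-1}D_{n-i-1}, \] where the polynomials $\tau_i=\tau_i(z)$ are defined by $\sum_{i\ge0}\tau_iw^i=\dfrac{w}{1-2w+w^2-z^3w^3}$.
   Context: For $h\ge1$, $D_h=D_h(z)$ is the determinant of the $h\times h$ matrix $T_h$ (rows/columns indexed $0,\dots,h-1$) with entries $(T_h)_{p,p}=1$, $(T_h)_{p,p+1}=-2z$, $(T_h)_{p,p+2}=z^2$, $(T_h)_{p+1,p}=-z^2$, and all other entries $0$; $D_0=1$. Let $M_n=T_n^{\mathsf T}$ (the transpose, so $\det M_n=D_n$). For $1\le i\le n$, $D_{n,i}$ denotes the determinant of the matrix obtained from $M_n$ by replacing its $i$-th column (columns numbered $1,\dots,n$) by the vector $(1,0,\dots,0)^{\mathsf T}$. *)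

(* Defs.v *)
From HB Require Import structures.
From mathcomp Require Import all_boot all_order all_algebra.
Set Implicit Arguments. Unset Strict Implicit. Unset Printing Implicit Defensive.
Import Order.TTheory GRing.Theory Num.Theory.
Local Open Scope ring_scope.

Definition Tmx (R : comRingType) (z : R) (h : nat) : 'M[R]_h :=
  \matrix_(p < h, q < h)
    (if q == p :> nat then 1
     else if q == p.+1 :> nat then - (2%:R * z)
     else if q == p.+2 :> nat then z ^+ 2
     else if p == q.+1 :> nat then - z ^+ 2
     else 0).

Definition Dpoly (R : comRingType) (z : R) (h : nat) : R := \det (Tmx z h).

Definition Mmx (R : comRingType) (z : R) (n : nat) : 'M[R]_n := (Tmx z n)^T.

(* D_{n,i}: determinant of M_n with its i-th column (columns numbered 1..n)
   replaced by (1,0,...,0)^T. *)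
Definition Dni (R : comRingType) (z : R) (n i : nat) : R :=
  \det (\matrix_(p < n, q < n)
          (if q == i.-1 :> nat then (p == 0 :> nat)%:R else Mmx z n p q)).

Definition denom_coef (R : comRingType) (z : R) (j : nat) : R :=
  match j with
  | 0 => 1
  | 1 => - 2%:R
  | 2 => 1
  | 3 => - z ^+ 3
  | _ => 0
  end.

(* tau is the coefficient sequence of w / (1 - 2w + w^2 - z^3 w^3), i.e.
   (1 - 2w + w^2 - z^3 w^3) * \sum_i tau_i w^i = w as formal power series,
   compared coefficientwise. *)
Definition is_tau_seq (R : comRingType) (z : R) (tau : nat -> R) : Prop :=
  forall k : nat,
    \sum_(j < k.+1) denom_coef z j * tau (k - j)%N = (k == 1%N)%:R.

(* Main.v *)
Require Import Defs.
From HB Require Import structures.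
From mathcomp Require Import all_boot all_order all_algebra.
From mathcomp Require Import ring zify.
Set Implicit Arguments.
Import GRing.Theory.
Local Open Scope ring_scope.

Section LD.
Variable R : comRingType.

Definition ld (a : nat -> nat -> R) (m : nat) : R :=
  \det (\matrix_(r < m, c < m) a r c).

Lemma ld_ext a b m : (forall r c, (r < m)%N -> (c < m)%N -> a r c = b r c) ->
  ld a m = ld b m.
Proof.
move=> h; rewrite /ld; congr (\det _); apply/matrixP => r c; rewrite !mxE.
exact: h.
Qed.

Lemma ld_tr a m : ld a m = ld (fun r c => a c r) m.
Proof.
rewrite /ld -det_tr; congr (\det _); apply/matrixP => r c; rewrite !mxE //.
Qed.

Lemma minor_eq (a : nat -> nat -> R) m (i j : 'I_m.+1) :
  row' i (col' j (\matrix_(r < m.+1, c < m.+1) a r c)) =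
  \matrix_(r < m, c < m) a (bump i r) (bump j c).
Proof. by apply/matrixP => r c; rewrite !mxE. Qed.

Lemma bump_lt (h c : nat) : (c < h)%N -> bump h c = c.
Proof. by move=> hc; rewrite /bump leqNgt hc. Qed.

Lemma ld_col a m : ld a m.+1 =
  \sum_(r < m.+1) a r m * ((-1) ^+ (r + m) * ld (fun r' c => a (bump r r') c) m).
Proof.
rewrite /ld (expand_det_col _ ord_max); apply: eq_bigr => r _.
rewrite /cofactor minor_eq mxE /=; congr (_ * (_ * _)).
congr (\det _); apply/matrixP => r' c; rewrite !mxE (@bump_lt m c (ltn_ord c)) //.
Qed.

Lemma ld_row a m : ld a m.+1 =
  \sum_(c < m.+1) a m c * ((-1) ^+ (m + c) * ld (fun r c' => a r (bump c c')) m).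
Proof.
rewrite ld_tr ld_col; apply: eq_bigr => c _; rewrite addnC; congr (_ * (_ * _)).
by rewrite ld_tr.
Qed.

Lemma sgkk k : (-1) ^+ (k + k) = 1 :> R.
Proof. by rewrite addnn -mul2n exprM sqrrN expr1n expr1n. Qed.

Lemma ld0 a : ld a 0 = 1.
Proof. by rewrite /ld det_mx00. Qed.

Lemma colLast1 a m : (forall r, (r < m)%N -> a r m = 0) -> ld a m.+1 = a m m * ld a m.
Proof.
move=> h; rewrite ld_col big_ord_recr /= big1 ?add0r; last first.
  by move=> r _; rewrite h ?mul0r.
rewrite sgkk mul1r; congr (_ * _).
by apply: ld_ext => r c hr _; rewrite (@bump_lt m r hr).
Qed.

Lemma rowLast1 a m : (forall c, (c < m)%N -> a m c = 0) -> ld a m.+1 = a m m * ld a m.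
Proof.
move=> h; rewrite ld_tr colLast1 //; by rewrite -ld_tr.
Qed.

Lemma colLast2 a m : (forall r, (r < m)%N -> a r m.+1 = 0) ->
  ld a m.+2 = a m.+1 m.+1 * ld a m.+1 - a m m.+1 * ld (fun r c => a (bump m r) c) m.+1.
Proof.
move=> h; rewrite ld_col big_ord_recr /= big_ord_recr /= big1 ?add0r; last first.
  by move=> r _; rewrite h ?mul0r.
rewrite sgkk mul1r addnS exprS sgkk mulr1 mulN1r mulrN addrC; congr (_ - _).
congr (_ * _); by apply: ld_ext => r c hr _; rewrite (@bump_lt m.+1 r hr).
Qed.

Lemma rowLast2 a m : (forall c, (c < m)%N -> a m.+1 c = 0) ->
  ld a m.+2 = a m.+1 m.+1 * ld a m.+1 - a m.+1 m * ld (fun r c => a r (bump m c)) m.+1.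
Proof.
move=> h; rewrite ld_tr colLast2 //; rewrite -ld_tr; congr (_ - _ * _).
by rewrite ld_tr.
Qed.

Lemma bump_ge (h c : nat) : (h <= c)%N -> bump h c = c.+1.
Proof. by move=> hc; rewrite /bump hc add1n. Qed.

Lemma band_rec a p :
  (forall c, (c < p.+1)%N -> a p.+2 c = 0) ->
  (forall c, (c < p)%N -> a p.+1 c = 0) ->
  (forall r, (r < p)%N -> a r p.+2 = 0) ->
  ld a p.+3 = a p.+2 p.+2 * ld a p.+2
     - a p.+2 p.+1 * (a p.+1 p.+2 * ld a p.+1 - a p.+1 p * (a p p.+2 * ld a p)).
Proof.
move=> h1 h2 h3; rewrite (@rowLast2 a p.+1 h1); congr (_ - _ * _).
rewrite rowLast2; last by move=> c hc; rewrite (@bump_lt p.+1 c) ?h2 // ltnW.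
rewrite (@bump_ge p.+1 p.+1) // (@bump_lt p.+1 p) //; congr (_ * _ - _ * _).
  by apply: ld_ext => r c _ hc; rewrite (@bump_lt p.+1 c).
rewrite colLast1; last first.
  by move=> r hr; rewrite (@bump_ge p p) // (@bump_ge p.+1 p.+1) // h3.
rewrite (@bump_ge p p) // (@bump_ge p.+1 p.+1) //; congr (_ * _).
apply: ld_ext => r c _ hc; rewrite (@bump_lt p c) // (@bump_lt p.+1 c) //.
exact: ltnW.
Qed.

End LD.
Arguments ld {R}.
Arguments ld_ext {R}. Arguments ld_tr {R}. Arguments ld_col {R}. Arguments ld_row {R}.
Arguments ld0 {R}. Arguments colLast1 {R}. Arguments rowLast1 {R}.
Arguments colLast2 {R}. Arguments rowLast2 {R}. Arguments band_rec {R}.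
Arguments minor_eq {R}. Arguments sgkk {R}.

Section S.
Variable R : comRingType.
Variable z : R.

Definition Tf (p q : nat) : R :=
    (if q == p :> nat then 1
     else if q == p.+1 :> nat then - (2%:R * z)
     else if q == p.+2 :> nat then z ^+ 2
     else if p == q.+1 :> nat then - z ^+ 2
     else 0).

Lemma Dpoly_ld h : Dpoly z h = ld Tf h.
Proof. by []. Qed.

Ltac tfs := rewrite /Tf; repeat (case: eqP => ?); try lia; by [].

Lemma Tf_d p : Tf p p = 1. Proof. tfs. Qed.
Lemma Tf_1 p : Tf p p.+1 = - (2%:R * z). Proof. tfs. Qed.
Lemma Tf_2 p : Tf p p.+2 = z ^+ 2. Proof. tfs. Qed.
Lemma Tf_m p : Tf p.+1 p = - z ^+ 2. Proof. tfs. Qed.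
Lemma Tf_0 p q : ((q.+1 < p) || (p.+2 < q))%N -> Tf p q = 0.
Proof. move=> /orP h; rewrite /Tf; repeat (case: eqP => ?); try lia; by []. Qed.


Definition Df m := ld Tf m.
Definition Uf r c := Tf r c.+1.
Definition Gf j r c := Tf (bump j r) c.+1.

Lemma bump_le1 j r : (bump j r <= r.+1)%N.
Proof. rewrite /bump; case: (j <= r)%N => //=. Qed.

Lemma D_rec p : Df p.+3 = Df p.+2 - 2%:R * z ^+ 3 * Df p.+1 + z ^+ 6 * Df p.
Proof.
rewrite /Df band_rec.
- rewrite Tf_d Tf_m Tf_1 Tf_m Tf_2; ring.
- by move=> c hc; rewrite Tf_0 //; apply/orP; left; lia.
- by move=> c hc; rewrite Tf_0 //; apply/orP; left; lia.
- by move=> r hr; rewrite Tf_0 //; apply/orP; right; lia.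
Qed.

Lemma D0 : Df 0 = 1. Proof. exact: ld0. Qed.
Lemma D1 : Df 1 = 1.
Proof. by rewrite /Df colLast1 // ld0 Tf_d mulr1. Qed.
Lemma D2 : Df 2 = 1 - 2%:R * z ^+ 3.
Proof.
rewrite /Df rowLast2 // -/(Df 1) D1 colLast1 // ld0 /= Tf_d Tf_m Tf_1; ring.
Qed.

Lemma U_rec m : ld Uf m.+3 = - (2%:R * z) * ld Uf m.+2 - z ^+ 2 * ld Uf m.+1
   - z ^+ 6 * ld Uf m.
Proof.
rewrite (colLast2 Uf m.+1); last by move=> r hr; rewrite /Uf Tf_0 //; apply/orP; right; lia.
rewrite (colLast2 (fun r c => Uf (bump m.+1 r) c) m); last first.
  by move=> r hr; rewrite /Uf (@bump_lt m.+1 r) ?Tf_0 //; [apply/orP; right|]; lia.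
rewrite (rowLast1 (fun r c => Uf (bump m.+1 (bump m r)) c) m); last first.
  move=> c hc; rewrite /Uf (@bump_ge m m) // (@bump_ge m.+1 m.+1) // Tf_0 //.
  by apply/orP; left; lia.
rewrite /Uf (@bump_ge m m) // (@bump_ge m.+1 m.+1) // (@bump_lt m.+1 m) //.
rewrite Tf_d Tf_1 Tf_2 Tf_m.
have -> : ld (fun r c => Tf (bump m.+1 r) c.+1) m.+1 = ld Uf m.+1.
  by apply: ld_ext => r c hr _; rewrite (@bump_lt m.+1 r).
have -> : ld (fun r c => Tf (bump m.+1 (bump m r)) c.+1) m = ld Uf m.
  apply: ld_ext => r c hr _; rewrite (@bump_lt m r) // (@bump_lt m.+1 r) //.
  exact: ltnW.
rewrite /Uf Tf_2; ring.
Qed.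

Lemma U0 : ld Uf 0 = 1. Proof. exact: ld0. Qed.
Lemma U1 : ld Uf 1 = - (2%:R * z).
Proof. by rewrite colLast1 // ld0 /Uf Tf_1 mulr1. Qed.
Lemma U2 : ld Uf 2 = 3%:R * z ^+ 2.
Proof.
rewrite colLast2 // U1 colLast1 // ld0 /Uf /= Tf_1 Tf_2 Tf_d; ring.
Qed.

Lemma G_low j m : (m <= j)%N -> ld (Gf j) m = ld Uf m.
Proof.
move=> hm; apply: ld_ext => r c hr _; rewrite /Gf /Uf (@bump_lt j r) //.
exact: leq_trans hr hm.
Qed.

Lemma G_j1 j : ld (Gf j.+1) j.+2 = ld Uf j.+1 + z ^+ 4 * ld Uf j.
Proof.
rewrite (rowLast2 (Gf j.+1) j); last first.
  move=> c hc; rewrite /Gf (@bump_ge j.+1 j.+1) // Tf_0 //; apply/orP; left; lia.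
rewrite G_low // (colLast1 (fun r c => Gf j.+1 r (bump j c)) j); last first.
  move=> r hr; rewrite /Gf (@bump_lt j.+1 r) ?(@bump_ge j j) // ?Tf_0 //;
    [apply/orP; right|]; lia.
rewrite /Gf (@bump_ge j.+1 j.+1) // (@bump_ge j j) // (@bump_lt j.+1 j) //.
rewrite Tf_d Tf_m Tf_2.
have -> : ld (fun r c => Tf (bump j.+1 r) (bump j c).+1) j = ld Uf j.
  apply: ld_ext => r c hr hc; rewrite (@bump_lt j c) // (@bump_lt j.+1 r) //.
  exact: ltnW.
ring.
Qed.

Lemma G_01 : ld (Gf 0) 1 = 1.
Proof. by rewrite colLast1 // ld0 /Gf Tf_d mulr1. Qed.

Lemma G_j2 j : ld (Gf j) j.+2 = ld (Gf j) j.+1 - 2%:R * z ^+ 3 * ld Uf j.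
Proof.
rewrite (rowLast2 (Gf j) j); last first.
  move=> c hc; rewrite /Gf (@bump_ge j j.+1) // Tf_0 //; apply/orP; left; lia.
rewrite (colLast1 (fun r c => Gf j r (bump j c)) j); last first.
  move=> r hr; rewrite /Gf (@bump_lt j r) ?(@bump_ge j j) // ?Tf_0 //;
    apply/orP; right; lia.
rewrite /Gf (@bump_ge j j.+1) // (@bump_ge j j) //.
rewrite Tf_d Tf_m Tf_1.
have -> : ld (fun r c => Tf (bump j r) (bump j c).+1) j = ld Uf j.
  by apply: ld_ext => r c hr hc; rewrite (@bump_lt j c) // (@bump_lt j r).
ring.
Qed.

Lemma G_rec j p : (j <= p)%N -> ld (Gf j) p.+3 =
  ld (Gf j) p.+2 - 2%:R * z ^+ 3 * ld (Gf j) p.+1 + z ^+ 6 * ld (Gf j) p.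
Proof.
move=> hp; rewrite band_rec.
- rewrite /Gf !bump_ge //; try lia.
  rewrite Tf_d Tf_m Tf_1 Tf_m Tf_2; ring.
- move=> c hc; rewrite /Gf bump_ge ?Tf_0 //; [apply/orP; left|]; lia.
- move=> c hc; rewrite /Gf bump_ge ?Tf_0 //; [apply/orP; left|]; lia.
- move=> r hr; rewrite /Gf Tf_0 //; apply/orP; right.
  have := bump_le1 j r; lia.
Qed.

End S.
Arguments Tf {R}. Arguments Uf {R}. Arguments Gf {R}. Arguments Df {R}.

Section T.
Variable R : comRingType.
Variable z : R.
Variable tau : nat -> R.
Hypothesis htau : is_tau_seq z tau.

Lemma tau0 : tau 0 = 0.
Proof. by have := htau 0; rewrite big_ord1 /= mul1r. Qed.
Lemma tau1 : tau 1 = 1.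
Proof. by have := htau 1; rewrite !big_ord_recl big_ord0 /= tau0 mulr0 !addr0 mul1r. Qed.
Lemma tau2 : tau 2 = 2%:R.
Proof.
have := htau 2; rewrite !big_ord_recl big_ord0 /= tau0 tau1 mulr0 !addr0 mul1r mulr1.
move=> h; rewrite -[tau 2](addrK (- 2%:R)) h; ring.
Qed.
Lemma tau_rec k : tau k.+3 = 2%:R * tau k.+2 - tau k.+1 + z ^+ 3 * tau k.
Proof.
have := htau k.+3; rewrite !big_ord_recl big1 /=; last first.
  by move=> i _; rewrite mul0r.
have -> : (k.+3 - bump 0 0 = k.+2)%N by [].
have -> : (k.+3 - bump 0 (bump 0 0) = k.+1)%N by [].
have -> : (k.+3 - bump 0 (bump 0 (bump 0 0)) = k)%N by rewrite /bump /=; lia.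
rewrite subn0 => h; apply/eqP; rewrite -subr_eq0; apply/eqP.
transitivity (1 * tau k.+3 + (- 2%:R * tau k.+2 + (1 * tau k.+1 + (- z ^+ 3 * tau k + 0)))); [ring | exact h].
Qed.

Definition v m := (- z) ^+ m * tau m.+1.

Lemma U_v m : ld (Uf z) m = v m.
Proof.
suff: [/\ ld (Uf z) m = v m, ld (Uf z) m.+1 = v m.+1 & ld (Uf z) m.+2 = v m.+2].
  by case.
elim: m => [|m [h0 h1 h2]].
  rewrite U0 U1 U2 /v tau1 tau2 tau_rec tau0 tau1 tau2; split; ring.
split; [exact: h1 | exact: h2 |]; rewrite U_rec h0 h1 h2 /v (tau_rec m.+1); rewrite !exprS; ring.
Qed.

Definition w j := z ^+ 4 * (- z) ^+ j.-1 * tau j.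

Lemma G1 j : ld (Gf z j) j.+1 = v j + w j.
Proof.
case: j => [|j].
  by rewrite G_01 /v /w tau1 tau0 expr0 !mulr0 addr0 mul1r.
rewrite G_j1 !U_v /v /w /=; ring.
Qed.

Lemma G2 j : ld (Gf z j) j.+2 = v j * Df z 2 + w j * Df z 1.
Proof. rewrite G_j2 G1 U_v D2 D1; ring. Qed.

Lemma G3 j : ld (Gf z j) j.+3 = v j * Df z 3 + w j * Df z 2.
Proof.
rewrite G_rec // G2 G1 G_low // U_v D_rec D2 D1 D0; ring.
Qed.

Lemma Gall j k : ld (Gf z j) (j + k).+1 = v j * Df z k.+1 + w j * Df z k.
Proof.
suff: [/\ ld (Gf z j) (j + k).+1 = v j * Df z k.+1 + w j * Df z k,
          ld (Gf z j) (j + k.+1).+1 = v j * Df z k.+2 + w j * Df z k.+1 &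
          ld (Gf z j) (j + k.+2).+1 = v j * Df z k.+3 + w j * Df z k.+2].
  by case.
elim: k => [|k [h0 h1 h2]].
  rewrite addn0 addn1 addn2 G1 G2 G3 D1 D0; split=> //; ring.
split; [exact: h1 | exact: h2 |].
have -> : ((j + k.+3).+1 = (j + k).+4)%N by rewrite !addnS.
rewrite G_rec; last by lia.
have -> : ((j + k).+3 = (j + k.+2).+1)%N by rewrite !addnS.
have -> : ((j + k).+2 = (j + k.+1).+1)%N by rewrite !addnS.
rewrite h2 h1 h0 (D_rec _ _ k.+1) (D_rec _ _ k); ring.
Qed.

End T.

Lemma Dni_G (R : comRingType) (z : R) j N : (j < N.+1)%N ->
  Dni z N.+1 j.+1 = (-1) ^+ j * ld (Gf z j) N.
Proof.
move=> hj.
have -> : Dni z N.+1 j.+1 =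
  \det (\matrix_(p < N.+1, q < N.+1) (if q == j :> nat then (p == 0 :> nat)%:R else Tf z q p)).
  by rewrite /Dni; congr (\det _); apply/matrixP => p q; rewrite !mxE.
rewrite (expand_det_col _ (Ordinal hj)) big_ord_recl big1 ?addr0; last first.
  by move=> r _; rewrite mxE /= eqxx mul0r.
rewrite mxE /= eqxx mul1r /cofactor (minor_eq (fun p q => if q == j then (p == 0 :> nat)%:R else Tf z q p)) /= add0n; congr (_ * _).
rewrite ld_tr /ld; congr (\det _); apply/matrixP => r c; rewrite !mxE /=.
by rewrite eq_sym (negbTE (neq_bump _ _)) /Gf (@bump_ge 0 r).
Qed.

Unset Implicit Arguments.

Theorem mainTheorem5 (R : comRingType) (z : R) (tau : nat -> R)
    (htau : is_tau_seq z tau) (n i : nat) :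
  (2 <= i.+1 <= n)%N ->
  Dni z n i =
    z ^+ (i.-1) * tau i * Dpoly z (n - i)
    - z ^+ (i + 2) * tau (i.-1) * Dpoly z (n - i - 1).
Proof.
case/andP=> hi hn.
case: i hi hn => [//|j] _ hn.
case: n hn => [//|N] hn.
have hj : (j < N.+1)%N by lia.
rewrite Dni_G // addn2.
have -> : N = (j + (N - j.+1)).+1 by lia.
rewrite (Gall htau) !Dpoly_ld.
have -> : ((j + (N - j.+1)).+2 - j.+1 = (N - j.+1).+1)%N by lia.
have -> : ((N - j.+1).+1 - 1 = (N - j.+1))%N by lia.
rewrite -/(Df z _) -/(Df z _).
have nz : forall m, (- z) ^+ m = (-1) ^+ m * z ^+ m.
  by move=> m; rewrite -exprMn mulN1r.
rewrite /v /w nz.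
case: j hj hn => [|j] _ _.
  rewrite (tau0 htau) !expr0 !mul1r mulr0 mul0r; ring.
have -> : (j.+1).-1 = j by [].
rewrite nz !exprS.
have s : (-1) ^+ j * (-1) ^+ j = 1 :> R by rewrite -exprD sgkk.
transitivity ((-1) ^+ j * (-1) ^+ j * ( (z * z ^+ j) * tau j.+2 * Df z (N - j.+2).+1
   - z^+4 * z ^+ j * tau j.+1 * Df z (N - j.+2))); first ring.
rewrite s; ring.
Qed.
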